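(* Let $0\le k\le n$. Consider $n$ men and $n$ women, and fix a set $G$ of $k$ men and $k$ women. Let $S(k,n)$ be the number of ways to choose the preference rankings of the $n-k$ men and $n-k$ women not in $G$ (each such person strictly ranking all $n$ people of the opposite gender) so that there is no pair of soulmates consisting of a man not in $G$ and a woman not in $G$. Then \[S(k,n) = \sum_{i=0}^{n-k} (-1)^{i}\binom{n-k}{i}^2 (n-1)!^{2i}\, i!\, n!^{2n-2k-2i}.\]
   Context: Each man strictly ranks the $n$ women by a bijection to $\{1,\dots,n\}$ (1 = favorite), and each woman strictly ranks the $n$ men likewise. A man and a woman are soulmates if each ranks the other first. *)

(* Defs.v *)
From mathcomp Require Import all_boot all_order all_algebra all_fingroup.
Set Implicit Arguments. Unset Strict Implicit. Unset Printing Implicit Defensive.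

(* A ranking of the n people of the
   opposite gender is a bijection 'I_n -> 'I_n (a permutation), where rank
   value 0 corresponds to the paper's rank 1 (favorite), value i to rank i+1. *)
Definition ranking n := {perm 'I_n}.

Definition outside n (G : {set 'I_n}) := {x : 'I_n | x \notin G}.

Definition pref_choice n (Gm Gw : {set 'I_n}) :=
  ({ffun outside Gm -> ranking n} * {ffun outside Gw -> ranking n})%type.

Definition soulmates n (Gm Gw : {set 'I_n}) (p : pref_choice Gm Gw)
  (m : outside Gm) (w : outside Gw) : bool :=
  ((p.1 m (val w) : nat) == 0%N) && ((p.2 w (val m) : nat) == 0%N).

Definition no_outside_soulmates n (Gm Gw : {set 'I_n}) (p : pref_choice Gm Gw) : bool :=
  [forall m : outside Gm, forall w : outside Gw, ~~ soulmates p m w].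

(* S(k,n) for the fixed G = Gm ∪ Gw *)
Definition S_count n (Gm Gw : {set 'I_n}) : nat :=
  #|[set p : pref_choice Gm Gw | no_outside_soulmates p]|.

(* Main.v *)
Require Import Defs.
From mathcomp Require Import all_boot all_order all_algebra all_fingroup.
From mathcomp Require Import ring zify.
Import GRing.Theory.
Local Open Scope ring_scope.

Lemma card_perm0 n (x : 'I_n) :
  #|[set s : {perm 'I_n} | (s x : nat) == 0%N]| = (n.-1)`!.
Proof.
case: n x => [|n] x; first by case: x.
pose E y := [set s : {perm 'I_n.+1} | s x == y].
have le y z : (#|E y| <= #|E z|)%N.
  rewrite -(card_imset _ (mulIg (tperm y z))); apply: subset_leq_card.
  apply/subsetP => s' /imsetP [s]; rewrite !inE => /eqP sx ->.
  by rewrite permM sx tpermL.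
have sumE : (\sum_(y : 'I_n.+1) #|E y| = (n.+1)`!)%N.
  rewrite -card_Sn.
  transitivity (\sum_(y : 'I_n.+1) \sum_(s : {perm 'I_n.+1}) ((s x == y) : nat))%N.
    apply: eq_bigr => y _; rewrite -sum1_card big_mkcond /=; apply: eq_bigr => s _; rewrite inE; by case: (_ == _).
  rewrite exchange_big /= -sum1_card; apply: eq_bigr => s _.
  by rewrite (bigD1 (s x)) //= eqxx big1 // => y /negbTE; rewrite eq_sym => ->.
have allE y : #|E y| = #|E ord0| by apply/eqP; rewrite eqn_leq !le.
rewrite (eq_bigr _ (fun y _ => allE y)) sum_nat_const card_ord factS in sumE.
have -> : [set s : {perm 'I_n.+1} | (s x : nat) == 0%N] = E ord0.
  by apply/setP => s; rewrite !inE.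
by apply/eqP; rewrite -(eqn_pmul2l (ltn0Sn n)) sumE.
Qed.
Lemma sum_b2n (T : finType) (P : pred T) :
  (\sum_(x : T) (P x : nat) = #|[set x | P x]|)%N.
Proof.
rewrite -sum1_card [RHS]big_mkcond /=; apply: eq_bigr => x _; rewrite inE; by case: (P x).
Qed.

Lemma prod_subsets (R : comRingType) (I : finType) (F G : I -> R) :
  \prod_i (F i + G i) =
  \sum_(A : {set I}) (\prod_(i in A) F i) * \prod_(i in ~: A) G i.
Proof.
pose F' i (b : bool) := if b then F i else G i.
transitivity (\prod_i \sum_(b : bool) F' i b).
  by apply: eq_bigr => i _; rewrite big_bool.
rewrite bigA_distr_bigA.
rewrite (reindex (fun A : {set I} => [ffun i => i \in A])); last first.
  exists (fun f : {ffun I -> bool} => [set i | f i]) => [A _|f _].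
    by apply/setP => i; rewrite inE ffunE.
  by apply/ffunP => i; rewrite ffunE inE.
apply: eq_bigr => A _.
rewrite (bigID (mem A)) /=; congr (_ * _).
  by apply: eq_big => i; rewrite ?ffunE /F' => // ->.
apply: eq_big => i; first by rewrite in_setC.
by rewrite ffunE /F' => /negbTE ->.
Qed.

Lemma sum_card_sets (R : comRingType) (I : finType) (H : nat -> R) :
  \sum_(A : {set I}) H #|A| = \sum_(i < #|I|.+1) 'C(#|I|, i)%:R * H i.
Proof.
transitivity (\sum_(A : {set I}) \sum_(i < #|I|.+1) ((#|A| == i)%:R * H i)).
  apply: eq_bigr => A _.
  have lt : (#|A| < #|I|.+1)%N by rewrite ltnS max_card.
  rewrite (bigD1 (Ordinal lt)) //= eqxx mul1r big1 ?addr0 // => i.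
  move=> ne; rewrite eq_sym; case: eqP => [e|]; last by rewrite mul0r.
  by case/eqP: ne; apply: val_inj; rewrite /= e.
rewrite exchange_big /=; apply: eq_bigr => i _.
rewrite -big_distrl /= -card_draws -sum_b2n natr_sum.
by congr (_ * _); apply: eq_bigr => A _; case: (_ == _).
Qed.

Section Main.
Variables (n : nat) (Gm Gw : {set 'I_n}).
Local Notation M := (outside Gm).
Local Notation W := (outside Gw).
Local Notation P := {perm 'I_n}.

Definition cnt (q : {ffun W -> P}) (m : M) : nat :=
  #|[set w : W | (q w (val m) : nat) == 0%N]|.

Definition Fm (q : {ffun W -> P}) (m : M) : {set P} :=
  [set s : P | [forall w : W, ~~ (((s (val w) : nat) == 0%N) && ((q w (val m) : nat) == 0%N))]].

Lemma step1 : S_count Gm Gw =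
  (\sum_(q : {ffun W -> P}) #|[set f : {ffun M -> P} | no_outside_soulmates ((f, q) : pref_choice Gm Gw)]|)%N.
Proof.
rewrite /S_count -sum1_card big_mkcond /=.
pose g f q := if no_outside_soulmates ((f, q) : pref_choice Gm Gw) then 1%N else 0%N.
transitivity (\sum_(p : {ffun M -> P} * {ffun W -> P}) g p.1 p.2)%N.
  by apply: eq_bigr => -[f q] _; rewrite inE.
rewrite -(pair_bigA _ g) /= exchange_big /=; apply: eq_bigr => q _.
rewrite -sum1_card [RHS]big_mkcond /=; apply: eq_bigr => f _; by rewrite inE.
Qed.

Lemma step2 q : #|[set f : {ffun M -> P} | no_outside_soulmates ((f, q) : pref_choice Gm Gw)]| =
  (\prod_(m : M) #|Fm q m|)%N.
Proof.
have -> : #|[set f : {ffun M -> P} | no_outside_soulmates ((f, q) : pref_choice Gm Gw)]| =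
   #|family (fun m : M => [pred s : P | s \in Fm q m])|.
  apply: eq_card => f; rewrite inE; apply/forallP/familyP => H m.
    by rewrite /= inE; apply/forallP => w; have /forallP := H m; apply.
  by apply/forallP => w; have := H m; rewrite /= inE => /forallP; apply.
rewrite card_family foldrE big_image /=.
by apply: eq_bigr => m _; apply: eq_card => s.
Qed.

Lemma atmost1 (s : P) (B : pred W) :
  (\sum_(w : W) ((B w) && ((s (val w) : nat) == 0%N) : nat) =
   [exists w, (B w) && ((s (val w) : nat) == 0%N)])%N.
Proof.
case: existsP => [[w0 /andP [Bw0 s0]]|none]; last first.
  by rewrite big1 // => w _; case: andP => // H; case: none; exists w; apply/andP.
rewrite (bigD1 w0) /= ?Bw0 ?s0 //= big1 // => w ne.
case: andP => // -[_ sw]; case/eqP: ne; apply: val_inj; apply: (@perm_inj _ s).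
by apply: val_inj; rewrite /= (eqP sw) (eqP s0).
Qed.

Lemma step3 q m :
  (#|Fm q m|%:R : int) = n`!%:R - (cnt q m)%:R * (n.-1)`!%:R.
Proof.
pose B := [set w : W | (q w (val m) : nat) == 0%N].
pose A := [set s : P | [exists w, (w \in B) && ((s (val w) : nat) == 0%N)]].
have -> : Fm q m = ~: A.
  apply/setP => s; rewrite !inE negb_exists; apply: eq_forallb => w.
  by rewrite inE andbC.
have cA : #|A| = (cnt q m * (n.-1)`!)%N.
  rewrite -sum_b2n.
  under eq_bigr do rewrite -atmost1.
  rewrite exchange_big /= /cnt -/B.
  transitivity (\sum_(w : W) ((w \in B) : nat) * (n.-1)`!)%N.
    apply: eq_bigr => w _; case: (w \in B) => /=.
      by rewrite mul1n -(@card_perm0 n (val w)) -sum_b2n.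
    by rewrite mul0n big1.
  by rewrite -big_distrl /= sum_b2n; congr (_ * _)%N; apply: eq_card => w; rewrite inE.
rewrite -(card_Sn n) -(cardsC A) natrD cA natrM.
ring.
Qed.

Lemma countq (A : {set M}) (h : {ffun {x : M | x \in A} -> W}) :
  #|[set q : {ffun W -> P} | [forall x, (q (h x) (val (val x)) : nat) == 0%N]]| =
  if injectiveb h then ((n.-1)`! ^ #|A| * n`! ^ (#|{: W}| - #|A|))%N else 0%N.
Proof.
case: injectiveP => [inj|ninj]; last first.
  apply/eqP; rewrite cards_eq0; apply/eqP/setP => q; rewrite !inE.
  apply/negbTE/negP => /forallP H; apply: ninj => x1 x2 e.
  have H1 := H x1; have H2 := H x2; rewrite -e in H2.
  apply: val_inj; apply: val_inj; apply: (@perm_inj _ (q (h x1))).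
  by apply: val_inj; rewrite /= (eqP H1) (eqP H2).
have -> : #|[set q : {ffun W -> P} | [forall x, (q (h x) (val (val x)) : nat) == 0%N]]| =
   #|family (fun w : W => [pred s : P | [forall x, (h x == w) ==> ((s (val (val x)) : nat) == 0%N)]])|.
  apply: eq_card => q; rewrite inE; apply/forallP/familyP => H.
    by move=> w; rewrite /=; apply/forallP => x; apply/implyP => /eqP <-; apply: H.
  by move=> x; have /forallP := H (h x); move/(_ x); rewrite eqxx.
rewrite card_family foldrE big_image /=.
rewrite (bigID (mem (codom h))) /=.
rewrite (eq_bigr (fun _ => (n.-1)`!)); last first.
  move=> w /codomP [x0 ->]; rewrite -(@card_perm0 n (val (val x0))).
  apply: eq_card => s; rewrite !inE; apply/forallP/idP => [H|s0 x].
    by have := H x0; rewrite eqxx.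
  by apply/implyP => /eqP/inj ->.
rewrite [X in (_ * X)%N](eq_bigr (fun _ => n`!)); last first.
  move=> w wn; rewrite -(card_Sn n); apply: eq_card => s; rewrite !inE.
  apply/forallP => x; apply/implyP => /eqP e; case/negP: wn; rewrite -e.
  exact: codom_f.
rewrite !prod_nat_const.
have cc : #|codom h| = #|A| by rewrite card_codom // card_sig.
have e := cardC (mem (codom h)); rewrite cc in e.
rewrite cc; congr (_ * _ ^ _)%N; rewrite -e addKn; apply: eq_card => w.
by rewrite !inE.
Qed.

Lemma step5 (A : {set M}) :
  \sum_(q : {ffun W -> P}) \prod_(m in A) ((cnt q m)%:R : int) =
  (#|{: W}| ^_ #|A| * ((n.-1)`! ^ #|A| * n`! ^ (#|{: W}| - #|A|)))%N%:R.
Proof.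
transitivity (\sum_(q : {ffun W -> P}) \sum_(h : {ffun {x : M | x \in A} -> W})
     \prod_(x : {x : M | x \in A}) ((((q (h x) (val (val x)) : nat) == 0%N) : nat)%:R : int)).
  apply: eq_bigr => q _; rewrite big_sub.
  transitivity (\prod_(x : {x : M | x \in A}) \sum_(w : W) ((((q w (val (val x)) : nat) == 0%N) : nat)%:R : int)).
    by apply: eq_bigr => x _; rewrite /cnt -sum_b2n natr_sum.
  by rewrite bigA_distr_bigA.
rewrite exchange_big /=.
transitivity (\sum_(h : {ffun {x : M | x \in A} -> W})
   (#|[set q : {ffun W -> P} | [forall x, (q (h x) (val (val x)) : nat) == 0%N]]|%:R : int)).
  apply: eq_bigr => h _; rewrite -sum_b2n natr_sum; apply: eq_bigr => q _.
  case: forallP => [H|H].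
    by rewrite big1 // => x _; rewrite H.
  have [x /negbTE Hx] : exists x, ~~ ((q (h x) (val (val x)) : nat) == 0%N).
    by apply/existsP; rewrite -negb_forall; apply/forallP.
  by rewrite (bigD1 x) //= Hx mul0r.
under eq_bigr do rewrite countq.
rewrite (eq_bigr (fun h : {ffun {x : M | x \in A} -> W} => ((injectiveb h : nat)%:R : int) * ((n.-1)`! ^ #|A| * n`! ^ (#|{: W}| - #|A|))%N%:R)); last first.
  by move=> h _; case: injectiveb; rewrite ?mul1r ?mul0r.
have cs : #|{: {x : M | x \in A}}| = #|A| by rewrite card_sig; apply: eq_card.
by rewrite -big_distrl /= -natr_sum sum_b2n card_inj_ffuns cs -natrM.
Qed.

Lemma total :
  ((S_count Gm Gw)%:R : int) =
  \sum_(i < #|{: M}|.+1) 'C(#|{: M}|, i)%:R *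
     ((-1) ^+ i * ((n.-1)`!%:R ^+ i * n`!%:R ^+ (#|{: M}| - i)) *
      (#|{: W}| ^_ i * ((n.-1)`! ^ i * n`! ^ (#|{: W}| - i)))%N%:R).
Proof.
pose H i := ((-1) ^+ i * ((n.-1)`!%:R ^+ i * n`!%:R ^+ (#|{: M}| - i)) *
      (#|{: W}| ^_ i * ((n.-1)`! ^ i * n`! ^ (#|{: W}| - i)))%N%:R : int).
transitivity (\sum_(A : {set M}) H #|A|); last by rewrite sum_card_sets.
rewrite /H step1 natr_sum.
under eq_bigr do rewrite step2 natr_prod.
under eq_bigr do under eq_bigr do rewrite step3 addrC.
under eq_bigr do rewrite prod_subsets.
rewrite exchange_big /=; apply: eq_bigr => A _.
rewrite -step5 big_distrr /=; apply: eq_bigr => q _.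
rewrite prodrN big_split /= !prodr_const.
have cA : #|~: A| = (#|{: M}| - #|A|)%N.
  by rewrite -(cardsC A) addKn.
rewrite cA; ring.
Qed.

End Main.

Theorem mainTheorem2 (n k : nat) (Gm Gw : {set 'I_n}) :
  (k <= n)%N -> #|Gm| = k -> #|Gw| = k ->
  (S_count Gm Gw)%:Z =
  \sum_(i < (n - k).+1)
     (-1) ^+ i *
     ('C(n - k, i) ^ 2 * (n.-1)`! ^ (2 * i) * i`! * n`! ^ (2 * n - 2 * k - 2 * i))%N%:Z.
Proof.
move=> kn cm cw.
have cardO (G : {set 'I_n}) : #|G| = k -> #|{: outside G}| = (n - k)%N.
  move=> cG; rewrite card_sig; have := cardsC G; rewrite card_ord cG => e.
  transitivity #|~: G|; first by apply: eq_card => x; rewrite !inE.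
  lia.
rewrite -natz total !cardO //; apply: eq_bigr => i _.
set N := (n - k)%N.
have e : ('C(N, i) ^ 2 * (n.-1)`! ^ (2 * i) * i`! * n`! ^ (2 * n - 2 * k - 2 * i) =
   'C(N, i) * ((n.-1)`! ^ i * n`! ^ (N - i)) * (N ^_ i * ((n.-1)`! ^ i * n`! ^ (N - i))))%N.
  have -> : (2 * n - 2 * k - 2 * i = (N - i) + (N - i))%N by rewrite /N; lia.
  rewrite -bin_ffact mul2n -addnn !expnD; ring.
rewrite -natz e !natrM !natrX; ring.
Qed.
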